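(* Let $(P,Q)$ be a quasi-projection pair on a Hilbert $C^*$-module $H$, and let $H_5=\overline{\mathcal{R}(PQ(I-P))}$ and $H_6=\overline{\mathcal{R}((I-P)QP)}$. Then the following are equivalent: (i) $Q=Q^*$; (ii) $H_5=\{0\}$; (iii) $H_6=\{0\}$.
   Context: $H$ is a Hilbert module over a $C^*$-algebra, $\mathcal{L}(H)$ the adjointable operators. A quasi-projection pair is $(P,Q)$ with $P\in\mathcal{L}(H)$ a projection (self-adjoint idempotent), $Q\in\mathcal{L}(H)$ an idempotent, such that $PQ^*P=PQP$, $PQ^*(I-P)=-PQ(I-P)$, $(I-P)Q^*(I-P)=(I-P)Q(I-P)$; equivalently $Q^*=(2P-I)Q(2P-I)$. *)

(* Defs.v *)
From HB Require Import structures.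
From mathcomp Require Import all_boot all_order all_algebra.
From mathcomp Require Import complex.
From mathcomp Require Import reals.
Set Implicit Arguments. Unset Strict Implicit. Unset Printing Implicit Defensive.
Import Order.TTheory GRing.Theory Num.Theory.
Local Open Scope ring_scope.
Local Open Scope complex_scope.

Section Hilbert_Cstar.
Variable R : realType.
Local Notation K := R[i].

Definition complete_wrt (V : zmodType) (nV : V -> R) : Prop :=
  forall u : nat -> V,
    (forall e : R, 0 < e -> exists N : nat, forall m n : nat,
        (N <= m)%N -> (N <= n)%N -> nV (u m - u n) < e) ->
    exists l : V, forall e : R, 0 < e -> exists N : nat, forall n : nat,
        (N <= n)%N -> nV (u n - l) < e.

Record is_cstar_algebra (A : lmodType K) (mul : A -> A -> A) (star : A -> A)
    (nA : A -> R) : Prop := {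
  cs_mulA : forall a b c, mul a (mul b c) = mul (mul a b) c;
  cs_mulDl : forall a b c, mul (a + b) c = mul a c + mul b c;
  cs_mulDr : forall a b c, mul a (b + c) = mul a b + mul a c;
  cs_mulZl : forall (k : K) a b, mul (k *: a) b = k *: mul a b;
  cs_mulZr : forall (k : K) a b, mul a (k *: b) = k *: mul a b;
  cs_starK : forall a, star (star a) = a;
  cs_starD : forall a b, star (a + b) = star a + star b;
  cs_starZ : forall (k : K) a, star (k *: a) = k^* *: star a;
  cs_starM : forall a b, star (mul a b) = mul (star b) (star a);
  cs_norm_eq0 : forall a, nA a = 0 -> a = 0;
  cs_normD : forall a b, nA (a + b) <= nA a + nA b;
  cs_normZ : forall (k : K) a, (nA (k *: a))%:C = `|k| * (nA a)%:C;
  cs_normM : forall a b, nA (mul a b) <= nA a * nA b;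
  cs_cstar : forall a, nA (mul (star a) a) = nA a ^+ 2;
  cs_complete : complete_wrt nA
}.

Definition cs_pos (A : lmodType K) (mul : A -> A -> A) (star : A -> A) (a : A)
  : Prop := exists b, a = mul (star b) b.

Definition hnorm (A H : lmodType K) (nA : A -> R) (ip : H -> H -> A) (x : H) : R :=
  Num.sqrt (nA (ip x x)).

Record is_hilbert_module (A : lmodType K) (mul : A -> A -> A) (star : A -> A)
    (nA : A -> R) (H : lmodType K) (act : H -> A -> H) (ip : H -> H -> A)
    : Prop := {
  hm_actA : forall x a b, act (act x a) b = act x (mul a b);
  hm_actDl : forall x y a, act (x + y) a = act x a + act y a;
  hm_actDr : forall x a b, act x (a + b) = act x a + act x b;
  hm_actZl : forall (k : K) x a, act (k *: x) a = k *: act x a;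
  hm_actZr : forall (k : K) x a, act x (k *: a) = k *: act x a;
  hm_ipD : forall x y z, ip x (y + z) = ip x y + ip x z;
  hm_ipZ : forall (k : K) x y, ip x (k *: y) = k *: ip x y;
  hm_ipA : forall x y a, ip x (act y a) = mul (ip x y) a;
  hm_ipC : forall x y, star (ip x y) = ip y x;
  hm_ip_pos : forall x, cs_pos mul star (ip x x);
  hm_ip_def : forall x, ip x x = 0 -> x = 0;
  hm_complete : complete_wrt (hnorm nA ip)
}.

Definition adjointable (A H : lmodType K) (ip : H -> H -> A) (T Ts : H -> H) : Prop :=
  forall x y, ip (T x) y = ip x (Ts y).

Definition compl_op (H : lmodType K) (T : H -> H) : H -> H := fun x => x - T x.

Definition quasi_projection_pair (A H : lmodType K) (ip : H -> H -> A)
    (P Q Qs : H -> H) : Prop :=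
  [/\ adjointable ip P P, P \o P =1 P,
      adjointable ip Q Qs, Q \o Q =1 Q &
      [/\ P \o Qs \o P =1 P \o Q \o P,
          P \o Qs \o compl_op P =1 (fun x => - (P \o Q \o compl_op P) x) &
          compl_op P \o Qs \o compl_op P =1 compl_op P \o Q \o compl_op P]].

Definition closure_range (H : lmodType K) (nH : H -> R) (T : H -> H) : H -> Prop :=
  fun y => forall e : R, 0 < e -> exists x, nH (T x - y) < e.

Definition is_zero_set (H : lmodType K) (S : H -> Prop) : Prop :=
  forall y, S y <-> y = 0.

End Hilbert_Cstar.

(* Main.v *)
Require Import Defs.
From HB Require Import structures.
From mathcomp Require Import all_boot all_order all_algebra.
From mathcomp Require Import complex.
From mathcomp Require Import reals.
Import Order.TTheory GRing.Theory Num.Theory.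
Local Open Scope ring_scope.
Local Open Scope complex_scope.

Section Aux.
Context {R : realType}.
Context {A : lmodType R[i]} {mul : A -> A -> A} {star : A -> A} {nA : A -> R}
  {H : lmodType R[i]} {act : H -> A -> H} {ip : H -> H -> A}.
Context (hA : is_cstar_algebra mul star nA).
Context (hH : is_hilbert_module mul star nA act ip).
Set Default Proof Using "hA hH".

Lemma ip0r x : ip x 0 = 0.
Proof. by rewrite -(scale0r (0:H)) (hm_ipZ hH) scale0r. Qed.

Lemma star0 : star 0 = 0.
Proof. by rewrite -(scale0r (0:A)) (cs_starZ hA) conjC0 !scale0r. Qed.

Lemma ip0l x : ip 0 x = 0.
Proof. by rewrite -(hm_ipC hH) ip0r star0. Qed.

Lemma ipNr x y : ip x (- y) = - ip x y.
Proof. by rewrite -scaleN1r (hm_ipZ hH) scaleN1r. Qed.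

Lemma starN a : star (- a) = - star a.
Proof. by rewrite -scaleN1r (cs_starZ hA) rmorphN1 scaleN1r. Qed.

Lemma ipDl x y z : ip (x + y) z = ip x z + ip y z.
Proof. by rewrite -(hm_ipC hH) (hm_ipD hH) (cs_starD hA) !(hm_ipC hH). Qed.

Lemma ipNl x z : ip (- x) z = - ip x z.
Proof. by rewrite -(hm_ipC hH) ipNr starN (hm_ipC hH). Qed.

Lemma ipBl x y z : ip (x - y) z = ip x z - ip y z.
Proof. by rewrite ipDl ipNl. Qed.

Lemma ip_inj u v : (forall w, ip u w = ip v w) -> u = v.
Proof.
move=> h; apply/eqP; rewrite -subr_eq0; apply/eqP; apply: (hm_ip_def hH).
by rewrite ipBl h subrr.
Qed.

Lemma adjD {T Ts} : adjointable ip T Ts -> forall x y, T (x + y) = T x + T y.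
Proof.
move=> hT x y; apply: ip_inj => w.
by rewrite hT ipDl ipDl !hT.
Qed.

Lemma adjB {T Ts} : adjointable ip T Ts -> forall x y, T (x - y) = T x - T y.
Proof.
move=> hT x y; apply: ip_inj => w.
by rewrite hT ipBl ipBl !hT.
Qed.

Lemma adj_sym {T Ts} : adjointable ip T Ts -> adjointable ip Ts T.
Proof. by move=> hT x y; rewrite -(hm_ipC hH) -hT (hm_ipC hH). Qed.

Lemma adj_zero {T Ts} : adjointable ip T Ts -> T =1 (fun=> 0) -> Ts =1 (fun=> 0).
Proof.
move=> hT h0 y; apply: ip_inj => w.
by rewrite (adj_sym hT) h0 ip0r ip0l.
Qed.

Lemma adj_comp {S Ss T Ts} : adjointable ip S Ss -> adjointable ip T Ts ->
  adjointable ip (S \o T) (Ts \o Ss).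
Proof. by move=> hS hT x y /=; rewrite hS hT. Qed.

Lemma adj_compl {P} : adjointable ip P P -> adjointable ip (compl_op P) (compl_op P).
Proof. by move=> hP x y; rewrite /compl_op ipBl (hm_ipD hH) ipNr hP. Qed.

Lemma complexI' (x y : R) : x%:C = y%:C -> x = y.
Proof. by case. Qed.

Lemma nA0 : nA 0 = 0.
Proof.
apply: complexI'; rewrite -(scale0r (0:A)) (cs_normZ hA) normr0 mul0r.
by [].
Qed.

Lemma nAN a : nA (- a) = nA a.
Proof.
apply: complexI'; by rewrite -scaleN1r (cs_normZ hA) normrN1 mul1r.
Qed.

Lemma nA_ge0 a : 0 <= nA a.
Proof.
have := cs_normD hA a (- a); rewrite subrr nA0 nAN => h.
by rewrite -(pmulr_rge0 _ (ltr0Sn _ 1%N)) mulr2n mulrDl mul1r.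
Qed.

Lemma zero_set_iff T : T 0 = 0 ->
  is_zero_set (closure_range (hnorm nA ip) T) <-> T =1 (fun=> 0).
Proof.
move=> T0; split.
- move=> hz x; apply/(hz (T x)) => e e0; exists x.
  by rewrite subrr /hnorm ip0r nA0 sqrtr0.
- move=> h y; split.
  + move=> hy.
    have hn : hnorm nA ip y = 0.
      apply/eqP; rewrite eq_le sqrtr_ge0 andbT; rewrite leNgt; apply/negP => hpos.
      have [x] := hy _ hpos; rewrite h sub0r /hnorm ipNl ipNr opprK.
      by rewrite ltxx.
    move: hn; rewrite /hnorm => /eqP; rewrite sqrtr_eq0 => hle.
    apply: (hm_ip_def hH); apply: (cs_norm_eq0 hA).
    by apply/eqP; rewrite eq_le hle nA_ge0.
  + move=> -> e e0; exists 0; by rewrite T0 subrr /hnorm ip0r nA0 sqrtr0.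
Qed.

Lemma half_zero (v : H) : v = - v -> v = 0.
Proof.
move=> h.
have h2 : v *+ 2 = 0 by rewrite mulr2n {1}h addNr.
have h2' : (2 : R[i]) *: v = 0 by rewrite scaler_nat.
have nz : (2 : R[i]) != 0 by rewrite pnatr_eq0.
by rewrite -(scale1r v) -(mulVf nz) -scalerA h2' scaler0.
Qed.

End Aux.
Unset Default Proof Using.

Theorem lemma2p12 (R : realType) (A : lmodType R[i]) (mul : A -> A -> A)
    (star : A -> A) (nA : A -> R) (H : lmodType R[i]) (act : H -> A -> H)
    (ip : H -> H -> A) (P Q Qs : H -> H) :
  is_cstar_algebra mul star nA ->
  is_hilbert_module mul star nA act ip ->
  quasi_projection_pair ip P Q Qs ->
  let H5 := closure_range (hnorm nA ip) (P \o Q \o compl_op P) in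
  let H6 := closure_range (hnorm nA ip) (compl_op P \o Q \o P) in
  ((Q =1 Qs) <-> is_zero_set H5) /\ (is_zero_set H5 <-> is_zero_set H6).
Proof.
move=> hA hH [hP _ hQ _ [c1 c2 c3]] H5 H6.
have hQs := adj_sym hA hH hQ.
have hC := adj_compl hA hH hP.
have P0 : P 0 = 0 by move: (adjB hA hH hP 0 0); rewrite !subrr.
have Q0 : Q 0 = 0 by move: (adjB hA hH hQ 0 0); rewrite !subrr.
have C0 : compl_op P 0 = 0 by rewrite /compl_op P0 subrr.
have b0 : (P \o Q \o compl_op P) 0 = 0 by rewrite /= C0 Q0 P0.
have cc0 : (compl_op P \o Q \o P) 0 = 0 by rewrite /= P0 Q0 C0.
rewrite /H5 /H6 !(zero_set_iff hA hH) //.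
have hd : adjointable ip (P \o Qs \o compl_op P) (compl_op P \o Q \o P).
  by move=> x y /=; rewrite hP hQs hC.
have he : adjointable ip (compl_op P \o Qs \o P) (P \o Q \o compl_op P).
  by move=> x y /=; rewrite hC hQs hP.
have bc : (P \o Q \o compl_op P) =1 (fun=> 0) <-> (compl_op P \o Q \o P) =1 (fun=> 0).
  split=> h.
  - apply: (adj_zero hA hH hd) => x; by rewrite c2 h oppr0.
  - have := adj_zero hA hH (adj_sym hA hH hd) h => hd0 x.
    by apply/eqP; rewrite -oppr_eq0 -c2 hd0.
split; last exact: bc.
split.
- move=> hQQ x; apply: (half_zero hA hH); rewrite -c2 /=; by rewrite -hQQ.
- move=> hb x.
  have hc := (proj1 bc) hb.
  have he0 := adj_zero hA hH (adj_sym hA hH he) hb.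
  have eQ : forall (T : H -> H) y, T y = P (T y) + compl_op P (T y).
    by move=> T y; rewrite /compl_op addrC subrK.
  have sx : x = P x + compl_op P x by rewrite /compl_op addrC subrK.
  rewrite sx (adjD hA hH hQ) (adjD hA hH hQs).
  rewrite (eQ Q (P x)) (eQ Q (compl_op P x)) (eQ Qs (P x)) (eQ Qs (compl_op P x)).
  have := c1 x; have := c3 x; have := c2 x; have := hb x; have := hc x; have := he0 x.
  rewrite /= => -> -> -> -> -> ->.
  by rewrite oppr0 !addr0 !add0r.
Qed.
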